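(* Let $(X,Y)\sim P_{X,Y}$ be random variables in $\{0,1\}\times\mathcal{Y}$, $\mathcal{Y}=\{1,\dots,|\mathcal{Y}|\}$, let $p_y=\mathbb{P}(X=0|Y=y)$ and assume $p_1\le\cdots\le p_{|\mathcal{Y}|}$. For $i\in\{2,\dots,|\mathcal{Y}|-1\}$ let $\alpha_i\in[0,1]$ satisfy $\alpha_ip_{i-1}+(1-\alpha_i)p_{i+1}=p_i$, and define the joint distribution $P^i_{Y,Z,X}=P_YP^i_{Z|Y}P^i_{X|Z}$ on $\mathcal{Y}\times(\mathcal{Y}\setminus\{i\})\times\{0,1\}$ by $P^i_{Z|Y}(z|y)=1$ if $y\neq i, z=y$; $=\alpha_i$ if $y=i,z=i-1$; $=1-\alpha_i$ if $y=i,z=i+1$; $=0$ otherwise; and $P^i_{X|Z}(0|z)=p_z$. Then under $P^i_{Y,Z,X}$, $X-Z-Y$ form a Markov chain in this order, $P^i_{X,Y}=P_{X,Y}$, and \[ I(X;Z)-I(X;Y)=P_Y(i)\big[h_2(\alpha_ip_{i-1}+(1-\alpha_i)p_{i+1})-\alpha_ih_2(p_{i-1})-(1-\alpha_i)h_2(p_{i+1})\big]. \]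
   Context: $h_2(p)=-p\log p-(1-p)\log(1-p)$ is the binary entropy function; logarithms are natural. *)

(* Defs.v *)
From HB Require Import structures.
From mathcomp Require Import all_boot all_order all_algebra.
From mathcomp Require Import all_classical all_reals all_analysis.
Set Implicit Arguments. Unset Strict Implicit. Unset Printing Implicit Defensive.
Import Order.TTheory GRing.Theory Num.Theory.
Local Open Scope ring_scope.

Section Defs.
Variable R : realType.

(* binary entropy, natural log; ln 0 = 0 in mathcomp-analysis, so 0 ln 0 = 0 *)
Definition h2 (q : R) : R := - (q * ln q) - (1 - q) * ln (1 - q).

(* mutual information of a joint pmf f on A x B (nats); terms with
   f a b = 0 vanish because of the factor f a b. *)
Definition mutual_info (A B : finType) (f : A -> B -> R) : R :=
  \sum_(a : A) \sum_(b : B)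
     f a b * ln (f a b / ((\sum_(b' : B) f a b') * (\sum_(a' : A) f a' b))).

(* A - B - C is a Markov chain under the joint pmf Q : A -> B -> C -> R,
   i.e. A and C are conditionally independent given B:
   Q(a,b,c) Q(b) = Q(a,b) Q(b,c). *)
Definition markov_chain (A B C : finType) (Q : A -> B -> C -> R) : Prop :=
  forall a b c,
    Q a b c * (\sum_(a' : A) \sum_(c' : C) Q a' b c')
    = (\sum_(c' : C) Q a b c') * (\sum_(a' : A) Q a' b c).

Definition Zalph (n : nat) (i : 'I_n) := {z : 'I_n | z != i}.

(* P^i_{Z|Y}(z|y); im, ip stand for i-1, i+1 *)
Definition PZgY (n : nat) (i im ip : 'I_n) (alpha : R)
    (y : 'I_n) (z : Zalph i) : R :=
  if y != i then (if val z == y then 1 else 0)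
  else if val z == im then alpha
  else if val z == ip then 1 - alpha
  else 0.

(* P^i_{X|Z}(x|z), X in 'I_2 with ord0 standing for X = 0 *)
Definition PXgZ (n : nat) (i : 'I_n) (p : 'I_n -> R) (x : 'I_2) (z : Zalph i) : R :=
  if x == ord0 then p (val z) else 1 - p (val z).

Definition PiYZX (n : nat) (PY : 'I_n -> R) (i im ip : 'I_n) (alpha : R)
    (p : 'I_n -> R) (y : 'I_n) (z : Zalph i) (x : 'I_2) : R :=
  PY y * PZgY im ip alpha y z * PXgZ p x z.

End Defs.

(* Main.v *)
Require Import Defs.
From HB Require Import structures.
From mathcomp Require Import all_boot all_order all_algebra.
From mathcomp Require Import all_classical all_reals all_analysis.
From mathcomp Require Import ring lra zify.
Import Order.TTheory GRing.Theory Num.Theory.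
Local Open Scope ring_scope.

Section S.
Variable R : realType.

Lemma sum_I2 (F : 'I_2 -> R) : \sum_(x : 'I_2) F x = F ord0 + F ord_max.
Proof. by rewrite big_ord_recl big_ord1; congr (_ + F _); apply: val_inj. Qed.

Definition phi (x : R) := x * ln x.

Lemma term_eq (w g P f : R) : 0 <= w -> 0 <= g -> f = w * g -> f <= P ->
  f * ln (f / (P * w)) = w * phi g - f * ln P.
Proof.
move=> w0 g0 -> fP; rewrite /phi.
have [wg0|wgpos] := eqVneq (w * g) 0.
  rewrite wg0 !mul0r subr0.
  move/eqP: wg0; rewrite mulf_eq0 => /orP[]/eqP->; by rewrite ?mul0r ?mulr0.
have wp : 0 < w by rewrite lt_neqAle eq_sym w0 andbT; apply: contraNneq wgpos => ->; rewrite mul0r.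
have gp : 0 < g by rewrite lt_neqAle eq_sym g0 andbT; apply: contraNneq wgpos => ->; rewrite mulr0.
have Pp : 0 < P by apply: lt_le_trans fP; rewrite mulr_gt0.
have -> : w * g / (P * w) = g / P by field; rewrite ?gt_eqF.
rewrite ln_div ?posrE //; ring.
Qed.

Lemma mi_formula (B : finType) (w q : B -> R) (f : 'I_2 -> B -> R) :
  (forall b, 0 <= w b) -> (forall b, 0 <= q b <= 1) ->
  (forall x b, f x b = w b * (if x == ord0 then q b else 1 - q b)) ->
  mutual_info f = - \sum_b w b * h2 (q b)
                  - \sum_x (\sum_b f x b) * ln (\sum_b f x b).
Proof.
move=> w0 q01 fE.
have fge0 : forall x b, 0 <= f x b.
  move=> x b; rewrite fE; apply: mulr_ge0 => //; case: ifP => _;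
  have := q01 b; lra.
have col : forall b, \sum_(a : 'I_2) f a b = w b.
  by move=> b; rewrite sum_I2 !fE /=; ring.
rewrite /mutual_info.
under eq_bigr => x _.
  under eq_bigr => b _.
    rewrite col (@term_eq (w b) (if x == ord0 then q b else 1 - q b)
        (\sum_b' f x b')); last first.
    - rewrite (bigD1 b) //= lerDl; apply: sumr_ge0 => *; exact: fge0.
    - exact: fE.
    - case: ifP => _; have := q01 b; lra.
    - done.
    over.
  rewrite sumrB -big_distrl /=.
  over.
rewrite /= sumrB. idtac.
rewrite sum_I2 -big_split /=; congr (_ + _); rewrite -sumrN; apply: eq_bigr => b _.
rewrite /h2 /phi /=; ring.
Qed.

Lemma sumZ n (i im ip : 'I_n) (alpha : R) (F : 'I_n -> R) (y : 'I_n) :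
  im != i -> ip != i -> im != ip ->
  \sum_(z : Zalph i) PZgY im ip alpha y z * F (val z)
  = if y != i then F y else alpha * F im + (1 - alpha) * F ip.
Proof.
move=> hm hp hmp; rewrite /PZgY.
case: (eqVneq y i) => [->|hy] /=.
  pose zm : Zalph i := exist _ im hm.
  pose zp : Zalph i := exist _ ip hp.
  rewrite (bigD1 zm) //= (bigD1 zp) /=; last by rewrite -(inj_eq val_inj) /= eq_sym.
  rewrite eqxx eq_sym (negbTE hmp) eqxx big1 ?addr0 //.
  move=> z /andP[nzm nzp].
  rewrite -(inj_eq val_inj) /= in nzm; rewrite -(inj_eq val_inj) /= in nzp.
  by rewrite (negbTE nzm) (negbTE nzp) mul0r.
pose z0 : Zalph i := exist _ y hy.
rewrite (bigD1 z0) //= eqxx mul1r big1 ?addr0 // => z nz.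
rewrite -(inj_eq val_inj) /= in nz.
by rewrite (negbTE nz) mul0r.
Qed.
End S.

Theorem proposition1 (R : realType) (n : nat) (pXY : 'I_2 -> 'I_n -> R)
    (p : 'I_n -> R) (i im ip : 'I_n) (alpha : R) :
  (forall x y, 0 <= pXY x y) ->
  \sum_(x : 'I_2) \sum_(y : 'I_n) pXY x y = 1 ->
  (* p_y = P(X = 0 | Y = y) (arbitrary in [0,1] when P_Y(y) = 0) *)
  (forall y, 0 <= p y <= 1) ->
  (forall y, pXY ord0 y = p y * \sum_(x : 'I_2) pXY x y) ->
  (forall y y' : 'I_n, (y <= y')%N -> p y <= p y') ->
  (* i in {2,...,|Y|-1} (1-based), im = i-1, ip = i+1 *)
  (im + 1 = i)%N -> (i + 1 = ip)%N ->
  0 <= alpha <= 1 ->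
  alpha * p im + (1 - alpha) * p ip = p i ->
  let PY := fun y => \sum_(x : 'I_2) pXY x y in
  let Q := PiYZX PY im ip alpha p in
  [/\ markov_chain (fun (x : 'I_2) (z : Zalph i) (y : 'I_n) => Q y z x),
      (forall x y, \sum_(z : Zalph i) Q y z x = pXY x y) &
      mutual_info (fun (x : 'I_2) (z : Zalph i) => \sum_(y : 'I_n) Q y z x)
        - mutual_info pXY
      = PY i * (h2 (alpha * p im + (1 - alpha) * p ip)
                - alpha * h2 (p im) - (1 - alpha) * h2 (p ip))].
Proof.
move=> H0 _ Hp Hp0 _ Hm Hpp Ha Hpi PY Q.
have hm : im != i by apply/eqP => e; rewrite e in Hm; lia.
have hp : ip != i by apply/eqP => e; rewrite e in Hpp; lia.
have hmp : im != ip by apply/eqP => e; rewrite e in Hm; lia.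
have PYge0 : forall y, 0 <= PY y by move=> y; apply: sumr_ge0 => *; exact: H0.
have pXYE : forall x y, pXY x y = PY y * (if x == ord0 then p y else 1 - p y).
  move=> x y; case: x => [[|[|m]] hx] //.
  - have -> : Ordinal hx = ord0 by apply: val_inj.
    by rewrite eqxx Hp0 mulrC.
  - have -> : Ordinal hx = ord_max by apply: val_inj.
    have e := Hp0 y; rewrite sum_I2 in e; rewrite /PY sum_I2 /=; nra.
have sX : forall z : Zalph i, \sum_(x : 'I_2) PXgZ p x z = 1.
  by move=> z; rewrite sum_I2 /PXgZ /=; ring.
have PZge0 : forall y (z : Zalph i), 0 <= PZgY im ip alpha y z.
  move=> y z; rewrite /PZgY; repeat case: ifP => _; lra.
pose W := fun z : Zalph i => \sum_(y : 'I_n) PY y * PZgY im ip alpha y z.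
have colZ : forall z x, \sum_(y : 'I_n) Q y z x = W z * PXgZ p x z.
  by move=> z x; rewrite /W big_distrl.
have claim2 : forall x y, \sum_(z : Zalph i) Q y z x = pXY x y.
  move=> x y.
  under eq_bigr => z _ do rewrite /Q /PiYZX /PXgZ -mulrA.
  rewrite -big_distrr (@sumZ R n i im ip alpha (fun v => if x == ord0 then p v else 1 - p v)) //.
  rewrite pXYE; case: eqVneq => [->|] //=; rewrite -Hpi; case: ifP => _; ring.
split => //.
- move=> a b c /=.
  rewrite colZ.
  under eq_bigr => a' _ do rewrite colZ.
  rewrite -big_distrr sX /Q /PiYZX -big_distrr sX /=; ring.
- rewrite (@mi_formula R _ W (fun z => p (val z))); last 3 first.
  + by move=> z; apply: sumr_ge0 => y _; apply: mulr_ge0.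
  + by move=> z; exact: Hp.
  + by move=> x z; rewrite colZ.
  rewrite (@mi_formula R _ PY p pXY) //.
  have rows : forall x, \sum_(z : Zalph i) \sum_(y : 'I_n) Q y z x = \sum_y pXY x y.
    by move=> x; rewrite exchange_big; apply: eq_bigr => y _; exact: claim2.
  rewrite (eq_bigr (fun x => (\sum_y pXY x y) * ln (\sum_y pXY x y))); last by move=> x _; rewrite rows.
  have -> : \sum_(z : Zalph i) W z * h2 (p (val z))
          = \sum_(y : 'I_n) PY y * (if y != i then h2 (p y)
                 else alpha * h2 (p im) + (1 - alpha) * h2 (p ip)).
    rewrite /W; under eq_bigr => z _ do rewrite big_distrl.
    rewrite exchange_big; apply: eq_bigr => y _.
    rewrite -(@sumZ R n i im ip alpha (fun v => h2 (p v))) // big_distrr; apply: eq_bigr => z _.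
    by rewrite /= mulrA.
  rewrite (bigD1 i) //= eqxx /= [\sum_b PY b * _](bigD1 i) //=.
  set S1 := \sum_(y | y != i) _.
  set S2 := \sum_(y | y != i) _.
  have -> : S1 = S2 by apply: eq_bigr => y ->.
  rewrite -Hpi; ring.
Qed.
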